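(* Let $R$ be a commutative ring with $\mathbb{Q}\subseteq R$, $\mathcal{A}$ a commutative unital $R$-algebra, and $\mathcal{E}$ a finitely generated projective $\mathcal{A}$-module with a symmetric, strongly nondegenerate, full $\mathcal{A}$-bilinear form $\langle\cdot,\cdot\rangle$. Let $\omega\in\Omega^r_{\mathcal{C}}(\mathcal{E})$ with $r\ge2$. Then there exist unique maps $\pi^{(p)}_\omega\in\operatorname{SDer}^p(\mathcal{A},\Omega^{r-2p}_{\mathcal{C}}(\mathcal{E}))$, one for each $p$ with $0\le2p\le r$, with two properties: (i) $\pi^{(0)}_\omega=\omega$; (ii) for every $p$ with $2(p+1)\le r$ and all $a_1,\dots,a_p\in\mathcal{A}$, the map $\pi^{(p+1)}_\omega(a_1,\dots,a_p,\cdot)$ is the symbol of $\pi^{(p)}_\omega(a_1,\dots,a_p)$. Concretely, $\pi^{(p+1)}_\omega(a_1,\dots,a_p,a)(x_1,\dots,x_{r-2p-2})=\sigma_{\pi^{(p)}_\omega(a_1,\dots,a_p)}(x_1,\dots,x_{r-2p-2})(a)$ for all $a\in\mathcal{A}$ and $x_i\in\mathcal{E}$.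
   Context: Strongly nondegenerate: $\mathcal{E}\to\operatorname{Hom}_{\mathcal{A}}(\mathcal{E},\mathcal{A})$ is an isomorphism. Full: every $a\in\mathcal{A}$ is a finite sum $\sum_i\langle x_i,y_i\rangle$. $\operatorname{Der}(\mathcal{A})$: $R$-linear derivations of $\mathcal{A}$. $\Omega^0_{\mathcal{C}}(\mathcal{E})=\mathcal{A}$. For $r\ge1$, $\Omega^r_{\mathcal{C}}(\mathcal{E})$ is the set of $\omega\in\operatorname{Hom}_R(\mathcal{E}^{\otimes_R r},\mathcal{A})$ satisfying two conditions: (a) $\omega(x_1,\dots,x_{r-1},ax_r)=a\,\omega(x_1,\dots,x_r)$ for all $a\in\mathcal{A}$; (b) if $r\ge2$, there is an $R$-multilinear map $\sigma_\omega:\mathcal{E}^{\otimes_R(r-2)}\to\operatorname{Der}(\mathcal{A})$ (the symbol of $\omega$) such that, for all $1\le i\le r-1$, $\omega(\dots,x_i,x_{i+1},\dots)+\omega(\dots,x_{i+1},x_i,\dots)=\sigma_\omega(x_1,\dots,\widehat{x_i},\widehat{x_{i+1}},\dots,x_r)\langle x_i,x_{i+1}\rangle$. The symbol is uniquely determined by fullness. For an $\mathcal{A}$-module $\mathcal{F}$, $\operatorname{SDer}^p(\mathcal{A},\mathcal{F})$ is the set of $R$-multilinear maps $\mathcal{A}^{\otimes_R p}\to\mathcal{F}$ that are symmetric and a derivation in each entry. By convention $\operatorname{SDer}^0(\mathcal{A},\mathcal{F})=\mathcal{F}$. *)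

(* Defs.v *)
From HB Require Import structures.
From mathcomp Require Import all_boot all_order all_algebra.
From mathcomp Require Import perm.
Set Implicit Arguments.
Unset Strict Implicit.
Unset Printing Implicit Defensive.
Import GRing.Theory.
Local Open Scope ring_scope.

Section Defs.

Variable R : comUnitRingType.
Variable A : comAlgType R.
Variable E : lmodType A.

(* "Q is contained in R": every positive integer is invertible in R. *)
Definition contains_rat (R' : unitRingType) : Prop :=
  forall n : nat, (n.+1)%:R \is a @GRing.unit R'.

Definition xat (V : zmodType) (n : nat) (x : 'I_n -> V) (k : nat) : V :=
  match insub k with Some i => x i | None => 0 end.

Definition upd (V : Type) (n : nat) (x : 'I_n -> V) (i : 'I_n) (v : V) : 'I_n -> V :=
  fun j => if j == i then v else x j.

Definition swap_adj (V : zmodType) (n : nat) (x : 'I_n -> V) (i : nat) : 'I_n -> V :=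
  fun j => xat x (if val j == i then i.+1 else if val j == i.+1 then i else val j).

Definition remove2 (V : zmodType) (n : nat) (x : 'I_n -> V) (i : nat) : 'I_(n - 2) -> V :=
  fun j => xat x (if (val j < i)%N then val j else (val j).+2).

Definition snoc_fun (V : Type) (p : nat) (a : 'I_p -> V) (c : V) : 'I_p.+1 -> V :=
  fun j => if unlift ord_max j is Some j' then a j' else c.

Definition Alinear (f : E -> A) : Prop :=
  forall (a : A) (u v : E), f (a *: u + v) = a * f u + f v.

Definition symmetric_bform (b : E -> E -> A) : Prop :=
  forall x y, b x y = b y x.

Definition Abilinear (b : E -> E -> A) : Prop :=
  (forall z, Alinear (b ^~ z)) /\ (forall x, Alinear (b x)).

(* E -> Hom_A(E, A), x |-> <x, .> is an isomorphism *)
Definition strongly_nondegenerate (b : E -> E -> A) : Prop :=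
  (forall x x', (forall y, b x y = b x' y) -> x = x') /\
  (forall phi : E -> A, Alinear phi -> exists x, forall y, phi y = b x y).

Definition full_form (b : E -> E -> A) : Prop :=
  forall a : A, exists s : seq (E * E), a = \sum_(q <- s) b q.1 q.2.

(* finitely generated projective: a direct summand of some A^n *)
Definition fg_projective : Prop :=
  exists n : nat, exists (f : 'rV[A]_n -> E) (g : E -> 'rV[A]_n),
    (forall (a : A) u v, f (a *: u + v) = a *: f u + f v) /\
    (forall (a : A) u v, g (a *: u + v) = a *: g u + g v) /\
    cancel g f.

Definition is_derivation (D : A -> A) : Prop :=
  (forall (c : R) (a a' : A), D (c *: a + a') = c *: D a + D a') /\
  (forall a a' : A, D (a * a') = a * D a' + D a * a').

Definition multilinearR (n : nat) (w : ('I_n -> E) -> A) : Prop :=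
  forall (x : 'I_n -> E) (i : 'I_n) (c : R) (u v : E),
    w (upd x i ((c%:A : A) *: u + v)) = c *: w (upd x i u) + w (upd x i v).

Definition is_symbol (b : E -> E -> A) (n : nat) (w : ('I_n -> E) -> A)
    (sigma : ('I_(n - 2) -> E) -> A -> A) : Prop :=
  (forall y, is_derivation (sigma y)) /\
  (forall (y : 'I_(n - 2) -> E) (k : 'I_(n - 2)) (c : R) (u v : E) (a : A),
     sigma (upd y k ((c%:A : A) *: u + v)) a
       = c *: sigma (upd y k u) a + sigma (upd y k v) a) /\
  (forall (x : 'I_n -> E) (i : nat), (i.+1 < n)%N ->
     w (swap_adj x i) + w x = sigma (remove2 x i) (b (xat x i) (xat x i.+1))).

(* Omega^n_C(E).  For n = 0 the conditions are vacuous: ('I_0 -> E) -> A is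
   (up to function extensionality) just A. *)
Definition is_Omega (b : E -> E -> A) (n : nat) (w : ('I_n -> E) -> A) : Prop :=
  (0 < n)%N ->
  [/\ multilinearR w,
      (forall (x : 'I_n -> E) (i : 'I_n) (a : A), (val i).+1 = n ->
         w (upd x i (a *: x i)) = a * w x)
    & (1 < n)%N -> exists sigma, is_symbol b w sigma].

Definition is_SDer_Omega (b : E -> E -> A) (p n : nat)
    (pi : ('I_p -> A) -> ('I_n -> E) -> A) : Prop :=
  [/\ forall a, is_Omega b (pi a),
      forall (s : {perm 'I_p}) (a : 'I_p -> A) (x : 'I_n -> E),
        pi (fun j => a (s j)) x = pi a x,
      forall (a : 'I_p -> A) (i : 'I_p) (c : R) (u v : A) (x : 'I_n -> E),
        pi (upd a i (c *: u + v)) x = c *: pi (upd a i u) x + pi (upd a i v) x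
    & forall (a : 'I_p -> A) (i : 'I_p) (u v : A) (x : 'I_n -> E),
        pi (upd a i (u * v)) x = u * pi (upd a i v) x + v * pi (upd a i u) x].

Definition is_pi_family (b : E -> E -> A) (r : nat) (w : ('I_r -> E) -> A)
    (pi : forall p : nat, ('I_p -> A) -> ('I_(r - p.*2) -> E) -> A) : Prop :=
  [/\ forall p : nat, (p.*2 <= r)%N -> is_SDer_Omega b (pi p),
      forall (a : 'I_0 -> A) (x : 'I_(r - 0.*2) -> E),
        pi 0%N a x = w (fun j : 'I_r => xat x (val j))
    & forall p : nat, ((p.+1).*2 <= r)%N -> forall a : 'I_p -> A,
        is_symbol b (pi p a)
          (fun (y : 'I_(r - p.*2 - 2) -> E) (c : A) =>
             pi p.+1 (snoc_fun a c) (fun j => xat y (val j)))].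

End Defs.

(* Main.v *)
Require Import Defs.
From mathcomp Require Import all_boot all_order all_algebra perm zify.
From Stdlib Require Import ClassicalEpsilon FunctionalExtensionality.
Set Implicit Arguments. Unset Strict Implicit. Unset Printing Implicit Defensive.
Import GRing.Theory.
Local Open Scope ring_scope.

Lemma xatE (V : zmodType) n (F : nat -> V) k :
  xat (fun j : 'I_n => F (val j)) k = if (k < n)%N then F k else 0.
Proof. by rewrite /xat; case: insubP => [j -> <-|/negbTE ->]. Qed.

Lemma xat_val (V : zmodType) n (x : 'I_n -> V) (j : 'I_n) : xat x (val j) = x j.
Proof. by rewrite /xat; case: insubP => [k _ /val_inj ->|]; rewrite ?ltn_ord. Qed.

Lemma xat_out (V : zmodType) n (x : 'I_n -> V) k : (n <= k)%N -> xat x k = 0.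
Proof. by rewrite /xat; case: insubP => [k' |]//= _ <-; rewrite leqNgt ltn_ord. Qed.

Lemma xat_xat (V : zmodType) n m (x : 'I_n -> V) (e : m = n) :
  (fun j : 'I_m => xat x (val j)) = (fun j => x (cast_ord e j)).
Proof. by subst; apply: functional_extensionality => j; rewrite xat_val; congr x; apply: val_inj. Qed.

Lemma xat_id (V : zmodType) n (x : 'I_n -> V) : (fun j : 'I_n => xat x (val j)) = x.
Proof. by apply: functional_extensionality => j; rewrite xat_val. Qed.

Definition c2 (V : zmodType) n (u v : V) (y : 'I_(n - 2) -> V) (k : nat) : V :=
  match k with 0 => u | 1 => v | k'.+2 => xat y k' end.
Definition cons2 (V : zmodType) n (u v : V) (y : 'I_(n - 2) -> V) : 'I_n -> V :=
  fun j => c2 u v y (val j).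

Lemma xat_cons2 (V : zmodType) n (u v : V) y k :
  xat (@cons2 V n u v y) k = if (k < n)%N then c2 u v y k else 0.
Proof. exact: xatE. Qed.

Lemma swap_cons2_0 (V : zmodType) n (u v : V) y : (2 <= n)%N ->
  swap_adj (@cons2 V n u v y) 0 = cons2 v u y.
Proof.
move=> hn; apply: functional_extensionality => -[[|[|k]] hk];
rewrite /swap_adj /cons2 /= xat_cons2 //=; last by rewrite hk.
by rewrite (leq_trans _ hn).
by rewrite (leq_trans _ hn).
Qed.

Lemma xat_swap (V : zmodType) n (x : 'I_n -> V) i k :
  xat (swap_adj x i) k = if (k < n)%N then
    xat x (if k == i then i.+1 else if k == i.+1 then i else k) else 0.
Proof. by rewrite {1}/xat; case: insubP => [j -> <-|/negbTE ->]. Qed.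

Lemma xat_remove2 (V : zmodType) n (x : 'I_n -> V) i k :
  xat (remove2 x i) k = if (k < n - 2)%N then
    xat x (if (k < i)%N then k else k.+2) else 0.
Proof. by rewrite {1}/xat; case: insubP => [j -> <-|/negbTE ->]. Qed.

Lemma xat_upd (V : zmodType) n (x : 'I_n -> V) i v k :
  xat (upd x i v) k = if k == val i then v else xat x k.
Proof.
rewrite /xat /upd; case: insubP => [j _ <-|]; first by rewrite (inj_eq val_inj).
by case: eqP => // ->; rewrite ltn_ord.
Qed.

Lemma swap_cons2_S (V : zmodType) n (u v : V) y j : (j.+1 < n - 2)%N ->
  swap_adj (@cons2 V n u v y) j.+2 = cons2 u v (swap_adj y j).
Proof.
move=> hj; apply: functional_extensionality => -[[|[|k]] hk];
rewrite /swap_adj /cons2 /= xat_cons2 /=.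
- by rewrite (leq_trans _ hk).
- by rewrite (leq_trans _ hk).
rewrite xat_swap.
have -> : (k < n - 2)%N by lia.
rewrite !eqSS; case: (k =P j) => [_|_]; first by rewrite ifT; [|lia].
case: (k =P j.+1) => [_|_]; first by rewrite ifT; [|lia].
by rewrite hk.
Qed.

Lemma remove2_cons2_0 (V : zmodType) n (u v : V) y :
  remove2 (@cons2 V n u v y) 0 = y.
Proof.
apply: functional_extensionality => -[k hk].
rewrite /remove2 /= xat_cons2 /= ifT; [exact: (xat_val y (Ordinal hk))|lia].
Qed.

Lemma remove2_cons2_S (V : zmodType) n (u v : V) y j :
  remove2 (@cons2 V n u v y) j.+2 = cons2 u v (remove2 y j).
Proof.
apply: functional_extensionality => -[[|[|k]] hk];
rewrite {1}/remove2 /cons2 /= xat_cons2 /=.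
- by rewrite ifT //; lia.
- by rewrite ifT //; lia.
rewrite xat_remove2 !ltnS.
have -> : (k < n - 2 - 2)%N by lia.
by case: (ltnP k j) => h /=; rewrite ifT //; lia.
Qed.

Lemma xat_cons2_S (V : zmodType) n (u v : V) y k :
  xat (@cons2 V n u v y) k.+2 = xat y k.
Proof.
rewrite xat_cons2 /=; case: ifP => // h.
by rewrite xat_out //; lia.
Qed.

Lemma xat_cons2_0 (V : zmodType) n (u v : V) y : (0 < n)%N -> xat (@cons2 V n u v y) 0 = u.
Proof. by move=> h; rewrite xat_cons2 h. Qed.

Lemma xat_cons2_1 (V : zmodType) n (u v : V) y : (1 < n)%N -> xat (@cons2 V n u v y) 1 = v.
Proof. by move=> h; rewrite xat_cons2 h. Qed.

Lemma upd_cons2 (V : zmodType) n (u v : V) y (k : 'I_(n - 2)) (k' : 'I_n) e :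
  val k' = (val k).+2 -> upd (@cons2 V n u v y) k' e = cons2 u v (upd y k e).
Proof.
move=> hk'; apply: functional_extensionality => -[[|[|m]] hm];
rewrite /upd /cons2 /=.
- by rewrite -(inj_eq val_inj) /= hk'.
- by rewrite -(inj_eq val_inj) /= hk'.
rewrite -(inj_eq val_inj) /= hk' !eqSS xat_upd.
by [].
Qed.

Section Alg.
Variables (R : comUnitRingType) (A : comAlgType R) (E : lmodType A).
Variable (b : E -> E -> A).
Hypothesis full : full_form b.

Lemma der_add (D : A -> A) : is_derivation D -> forall a a', D (a + a') = D a + D a'.
Proof. by case=> h _ a a'; rewrite -[a in LHS]scale1r h scale1r. Qed.

Lemma der0 (D : A -> A) : is_derivation D -> D 0 = 0.
Proof. move=> h; have := der_add h 0 0; rewrite addr0 => e. by apply: (@addrI _ (D 0)); rewrite -e addr0. Qed.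

Lemma der_sum (D : A -> A) (I : Type) (s : seq I) (f : I -> A) :
  is_derivation D -> D (\sum_(q <- s) f q) = \sum_(q <- s) D (f q).
Proof. by move=> h; apply: (big_morph D (der_add h) (der0 h)). Qed.

Lemma der_comb (D1 D2 : A -> A) (al be : A) : is_derivation D1 -> is_derivation D2 ->
  is_derivation (fun x => al * D1 x + be * D2 x).
Proof.
case=> l1 m1 [l2 m2]; split=> [c a a'|a a'].
  by rewrite l1 l2 !mulrDr scalerDr -!scalerAr addrACA.
by rewrite m1 m2 !mulrDr !mulrDl !mulrA ![al * a]mulrC ![be * a]mulrC -!mulrA addrACA.
Qed.

Lemma der_zero : is_derivation (fun _ : A => 0 : A).
Proof. by split=> [c a a'|a a']; rewrite ?scaler0 ?mulr0 ?mul0r ?addr0. Qed.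

Lemma der_sumfam (I : Type) (s : seq I) (D : I -> A -> A) :
  (forall i, is_derivation (D i)) -> is_derivation (fun x => \sum_(q <- s) D q x).
Proof.
move=> hD; elim: s => [|q s IH].
  by under [fun _ => _]functional_extensionality => x do rewrite big_nil; exact: der_zero.
have := der_comb 1 1 (hD q) IH.
by under [fun _ => _ + _]functional_extensionality => x do rewrite !mul1r; under [fun _ => \sum_(_ <- _) _]functional_extensionality => x do rewrite big_cons.
Qed.

Definition rep (a : A) : seq (E * E) :=
  epsilon (inhabits [::]) (fun s => a = \sum_(q <- s) b q.1 q.2).

Lemma rep_spec a : a = \sum_(q <- rep a) b q.1 q.2.
Proof. rewrite /rep; apply: (epsilon_spec (inhabits [::] : inhabited (seq (E * E))) (fun s => a = \sum_(q <- s) b q.1 q.2)). exact: full. Qed.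

Lemma der_rep (D : A -> A) a : is_derivation D -> D a = \sum_(q <- rep a) D (b q.1 q.2).
Proof. by move=> h; rewrite {1}(rep_spec a) der_sum. Qed.

End Alg.

Section Sym.
Variables (R : comUnitRingType) (A : comAlgType R) (E : lmodType A).
Variable (b : E -> E -> A).
Hypothesis full : full_form b.

Lemma der_add2 (D1 D2 : A -> A) : is_derivation D1 -> is_derivation D2 ->
  is_derivation (fun x => D1 x + D2 x).
Proof.
case=> l1 m1 [l2 m2]; split=> [c a a'|a a'].
  by rewrite l1 l2 scalerDr addrACA.
by rewrite m1 m2 mulrDr mulrDl addrACA.
Qed.

Lemma sym_pair n (w : ('I_n -> E) -> A) s : (1 < n)%N -> is_symbol b w s ->
  forall u v y, s y (b u v) = w (cons2 v u y) + w (cons2 u v y).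
Proof.
move=> hn [_ [_ h3]] u v y.
have := h3 (cons2 u v y) 0 hn.
rewrite swap_cons2_0 // remove2_cons2_0 xat_cons2_0 ?xat_cons2_1 //; try lia.
all: try by move=> <-.
Qed.

Lemma sym_unique n (w : ('I_n -> E) -> A) s1 s2 : (1 < n)%N ->
  is_symbol b w s1 -> is_symbol b w s2 -> s1 = s2.
Proof.
move=> hn h1 h2; apply: functional_extensionality => y; apply: functional_extensionality => c.
rewrite (der_rep full c (h1.1 y)) (der_rep full c (h2.1 y)).
by apply: eq_bigr => q _; rewrite (sym_pair hn h1) (sym_pair hn h2).
Qed.

Lemma sym_comb n (w1 w2 : ('I_n -> E) -> A) s1 s2 (al be : A) :
  is_symbol b w1 s1 -> is_symbol b w2 s2 ->
  is_symbol b (fun x => al * w1 x + be * w2 x) (fun y d => al * s1 y d + be * s2 y d).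
Proof.
move=> [d1 [l1 h1]] [d2 [l2 h2]]; split; last split.
- by move=> y; apply: der_comb.
- by move=> y k c u v a; rewrite l1 l2 !mulrDr scalerDr -!scalerAr addrACA.
- by move=> x i hi; rewrite -h1 // -h2 // !mulrDr addrACA.
Qed.

Lemma key4 n (w : ('I_n -> E) -> A) s : is_symbol b w s ->
  forall (y : 'I_(n - 2) -> E) u1 u2 j, (j.+1 < n - 2)%N ->
  s (swap_adj y j) (b u1 u2) + s y (b u1 u2) =
  s (cons2 u1 u2 (remove2 y j)) (b (xat y j) (xat y j.+1)) +
  s (cons2 u2 u1 (remove2 y j)) (b (xat y j) (xat y j.+1)).
Proof.
move=> hs y u1 u2 j hj.
have hn : (1 < n)%N by lia.
rewrite (sym_pair hn hs u1 u2 (swap_adj y j)) (sym_pair hn hs u1 u2 y).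
have h := hs.2.2.
have e1 := h (cons2 u1 u2 y) j.+2 ltac:(lia).
have e2 := h (cons2 u2 u1 y) j.+2 ltac:(lia).
rewrite swap_cons2_S // remove2_cons2_S !xat_cons2_S in e1.
rewrite swap_cons2_S // remove2_cons2_S !xat_cons2_S in e2.
by rewrite -e1 -e2 addrACA addrC.
Qed.

Definition tau n (s : ('I_(n - 2) -> E) -> A -> A) (c : A) : ('I_(n - 2 - 2) -> E) -> A -> A :=
  fun z d => \sum_(q <- rep b c) (s (cons2 q.1 q.2 z) d + s (cons2 q.2 q.1 z) d).

Lemma tau_symbol n (w : ('I_n -> E) -> A) s c : (1 < n - 2)%N -> is_symbol b w s ->
  is_symbol b (fun y => s y c) (tau s c).
Proof.
move=> hn2 hs; split; last split.
- move=> z; apply: der_sumfam => q; apply: der_add2; exact: hs.1.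
- move=> z k c' u v d.
  have hk2 : ((val k).+2 < n - 2)%N by have := ltn_ord k; rewrite /=; lia.
  pose k' : 'I_(n - 2) := Ordinal hk2.
  rewrite /tau scaler_sumr -big_split /=; apply: eq_bigr => q _.
  rewrite -!(upd_cons2 _ _ _ (k':=k')) //.
  by rewrite !hs.2.1 scalerDr addrACA.
- move=> y j hj.
  rewrite /tau [s (swap_adj y j) c](der_rep full c (hs.1 _)) [s y c](der_rep full c (hs.1 _)).
  rewrite -big_split; apply: eq_bigr => q _ /=; exact: (key4 hs y q.1 q.2 hj).
Qed.


Lemma Omega_sigma n (w : ('I_n -> E) -> A) s : (1 < n)%N -> is_Omega b w ->
  is_symbol b w s -> forall c, is_Omega b (fun y => s y c).
Proof.
move=> hn hw hs c hpos.
have [ml lin _] := hw (ltnW hn).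
split.
- by move=> y k c' u v; exact: hs.2.1.
- move=> y i al hi.
  have hi' : (nat_of_ord i).+1 = (n - 2)%N := hi.
  have hi2 : ((val i).+2 < n)%N by rewrite /=; lia.
  pose i' : 'I_n := Ordinal hi2.
  have L : forall u v, w (cons2 u v (upd y i (al *: y i))) = al * w (cons2 u v y).
    move=> u v; rewrite -(upd_cons2 _ _ _ (k':=i')) //.
    have e : cons2 u v y i' = y i by rewrite /cons2 /= xat_val.
    rewrite -e; apply: lin => /=; lia.
  rewrite (der_rep full c (hs.1 _)) [in RHS](der_rep full c (hs.1 _)) mulr_sumr.
  by apply: eq_bigr => q _; rewrite !(sym_pair hn hs) !L mulrDr.
- by move=> hn2; exists (tau s c); apply: (@tau_symbol n w s c hn2 hs).
Qed.

Lemma tau_expand n (w : ('I_n -> E) -> A) s c z d : is_symbol b w s ->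
  tau s c z d = \sum_(q <- rep b c) \sum_(r <- rep b d)
     (s (cons2 q.1 q.2 z) (b r.1 r.2) + s (cons2 q.2 q.1 z) (b r.1 r.2)).
Proof.
move=> hs; rewrite /tau; apply: eq_bigr => q _.
rewrite (der_rep full d (hs.1 (cons2 q.1 q.2 z))).
by rewrite (der_rep full d (hs.1 (cons2 q.2 q.1 z))) -big_split.
Qed.

Lemma tau_sym n (w : ('I_n -> E) -> A) s c z d : (1 < n - 2)%N -> is_symbol b w s ->
  tau s c z d = tau s d z c.
Proof.
move=> hn hs; rewrite !(tau_expand _ _ _ hs) exchange_big.
apply: eq_bigr => r _; apply: eq_bigr => q _.
have := key4 hs (cons2 r.1 r.2 z) q.1 q.2 hn.
rewrite swap_cons2_0 // remove2_cons2_0 xat_cons2_0 ?xat_cons2_1 //; try lia.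
by move=> e; rewrite -e addrC.
Qed.

End Sym.

Lemma xat2 (V : zmodType) n m (x : 'I_n -> V) : m = n ->
  (fun j : 'I_n => xat (fun k : 'I_m => xat x (val k)) (val j)) = x.
Proof.
move=> e; apply: functional_extensionality => j.
rewrite {1}/xat; case: insubP => [k _ ->|]; first by rewrite xat_val.
by rewrite e ltn_ord.
Qed.

Definition init (V : Type) p (a : 'I_p.+1 -> V) : 'I_p -> V := fun j => a (lift ord_max j).

Lemma init_snoc (V : Type) p (a : 'I_p -> V) c : init (snoc_fun a c) = a.
Proof. by apply: functional_extensionality => j; rewrite /init /snoc_fun liftK. Qed.

Lemma snoc_max (V : Type) p (a : 'I_p -> V) c : snoc_fun a c ord_max = c.
Proof. by rewrite /snoc_fun unlift_none. Qed.

Lemma snoc_init (V : Type) p (a : 'I_p.+1 -> V) : snoc_fun (init a) (a ord_max) = a.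
Proof.
apply: functional_extensionality => j; rewrite /snoc_fun /init.
by case: unliftP => [k ->|->].
Qed.

Lemma init_upd_lift (V : Type) p (a : 'I_p.+1 -> V) i x :
  init (upd a (lift ord_max i) x) = upd (init a) i x.
Proof.
apply: functional_extensionality => j; rewrite /init /upd.
by rewrite (inj_eq lift_inj).
Qed.

Lemma upd_lift_max (V : Type) p (a : 'I_p.+1 -> V) i x :
  upd a (lift ord_max i) x ord_max = a ord_max.
Proof. by rewrite /upd (negbTE (neq_lift _ _)). Qed.

Lemma init_upd_max (V : Type) p (a : 'I_p.+1 -> V) x : init (upd a ord_max x) = init a.
Proof.
apply: functional_extensionality => j; rewrite /init /upd.
by rewrite eq_sym (negbTE (neq_lift _ _)).
Qed.

Lemma upd_max_max (V : Type) p (a : 'I_p.+1 -> V) x : upd a ord_max x ord_max = x.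
Proof. by rewrite /upd eqxx. Qed.

Section Pi.
Variables (R : comUnitRingType) (A : comAlgType R) (E : lmodType A).
Variable (b : E -> E -> A).
Hypothesis full : full_form b.

Definition symb n (w : ('I_n -> E) -> A) : ('I_(n - 2) -> E) -> A -> A :=
  epsilon (inhabits (fun _ _ => 0)) (fun s => is_symbol b w s).

Lemma symb_ok n (w : ('I_n -> E) -> A) : (1 < n)%N -> is_Omega b w -> is_symbol b w (symb w).
Proof.
move=> hn hw; have [_ _ h] := hw (ltnW hn).
rewrite /symb; apply: (epsilon_spec (inhabits (fun _ _ => 0) : inhabited (('I_(n - 2) -> E) -> A -> A)) (fun s => is_symbol b w s)).
exact: h.
Qed.

Lemma symb_eq n (w : ('I_n -> E) -> A) s : (1 < n)%N -> is_Omega b w -> is_symbol b w s ->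
  symb w = s.
Proof. by move=> hn hw hs; apply: (sym_unique full hn (symb_ok hn hw) hs). Qed.

Lemma Omega_cast n m (e : m = n) (f : ('I_n -> E) -> A) :
  is_Omega b f -> is_Omega b (fun x : 'I_m -> E => f (fun j => xat x (val j))).
Proof.
subst m => h.
have -> : (fun x : 'I_n -> E => f (fun j => xat x (val j))) = f.
  by apply: functional_extensionality => x; rewrite xat_id.
exact: h.
Qed.

Lemma symbol_cast n m (e : m = n) (f : ('I_n -> E) -> A) s :
  is_symbol b f s -> is_symbol b (fun x : 'I_m -> E => f (fun j => xat x (val j)))
     (fun z d => s (fun j => xat z (val j)) d).
Proof.
subst m => h.
have -> : (fun x : 'I_n -> E => f (fun j => xat x (val j))) = f.
  by apply: functional_extensionality => x; rewrite xat_id.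
have -> : (fun (z : 'I_(n - 2) -> E) d => s (fun j => xat z (val j)) d) = s.
  by apply: functional_extensionality => z; apply: functional_extensionality => d; rewrite xat_id.
exact: h.
Qed.

Lemma symb_of n (w : ('I_n -> E) -> A) s : (1 < n)%N -> is_symbol b w s -> symb w = s.
Proof.
move=> hn hs; apply: (sym_unique full hn _ hs).
rewrite /symb; apply: (epsilon_spec (inhabits (fun _ _ => 0) : inhabited (('I_(n - 2) -> E) -> A -> A)) (fun s => is_symbol b w s)).
by exists s.
Qed.

End Pi.

Section Main.
Variables (R : comUnitRingType) (A : comAlgType R) (E : lmodType A).
Variable (b : E -> E -> A).
Hypothesis full : full_form b.
Variables (r : nat) (w : ('I_r -> E) -> A).
Hypothesis hw : is_Omega b w.

Fixpoint piF (p : nat) : ('I_p -> A) -> ('I_(r - p.*2) -> E) -> A :=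
  match p return ('I_p -> A) -> ('I_(r - p.*2) -> E) -> A with
  | 0 => fun a x => w (fun j => xat x (val j))
  | q.+1 => fun a y => symb b (@piF q (init a)) (fun j => xat y (val j)) (a ord_max)
  end.
Arguments piF : clear implicits.

Lemma pi_S p a y : piF p.+1 a y = symb b (piF p (init a)) (fun j => xat y (val j)) (a ord_max).
Proof. by []. Qed.

Lemma pi_Omega p : (p.*2 <= r)%N -> forall a, is_Omega b (piF p a).
Proof.
elim: p => [|p IH] hp a.
  have e : (r - 0.*2 = r)%N by lia.
  exact: (Omega_cast e hw).
have hp' : (p.*2 <= r)%N by lia.
have hn : (1 < r - p.*2)%N by lia.
have hO := IH hp' (init a).
have hs := symb_ok hn hO.
have := Omega_sigma full hn hO hs (a ord_max).
have e : (r - p.+1.*2 = r - p.*2 - 2)%N by lia.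
move/(Omega_cast e) => h.
exact: h.
Qed.

Lemma pi_Lin p : (p.*2 <= r)%N -> forall a i (c : R) u v,
  piF p (upd a i (c *: u + v)) = fun x => c *: piF p (upd a i u) x + piF p (upd a i v) x.
Proof.
elim: p => [|p IH] hp a i c u v; first by case: i.
have hp' : (p.*2 <= r)%N by lia.
have hn : (1 < r - p.*2)%N by lia.
apply: functional_extensionality => y; rewrite !pi_S.
case: (unliftP ord_max i) => [i' ->|->].
  rewrite !init_upd_lift !upd_lift_max (IH hp').
  set P := piF p (upd (init a) i' u); set Q := piF p (upd (init a) i' v).
  have hP := symb_ok hn (pi_Omega hp' (upd (init a) i' u)).
  have hQ := symb_ok hn (pi_Omega hp' (upd (init a) i' v)).
  have := sym_comb (c%:A) 1 hP hQ.
  have -> : (fun x => c%:A * P x + 1 * Q x) = (fun x => c *: P x + Q x).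
    by apply: functional_extensionality => x; rewrite mulr_algl mul1r.
  by move/(symb_of full hn) => ->; rewrite mulr_algl mul1r.
rewrite !init_upd_max !upd_max_max.
by rewrite ((symb_ok hn (pi_Omega hp' (init a))).1 _).1.
Qed.

Lemma pi_Der p : (p.*2 <= r)%N -> forall a i u v,
  piF p (upd a i (u * v)) = fun x => u * piF p (upd a i v) x + v * piF p (upd a i u) x.
Proof.
elim: p => [|p IH] hp a i u v; first by case: i.
have hp' : (p.*2 <= r)%N by lia.
have hn : (1 < r - p.*2)%N by lia.
apply: functional_extensionality => y; rewrite !pi_S.
case: (unliftP ord_max i) => [i' ->|->].
  rewrite !init_upd_lift !upd_lift_max (IH hp').
  set P := piF p (upd (init a) i' v); set Q := piF p (upd (init a) i' u).
  have hP := symb_ok hn (pi_Omega hp' (upd (init a) i' v)).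
  have hQ := symb_ok hn (pi_Omega hp' (upd (init a) i' u)).
  have := sym_comb u v hP hQ.
  by move/(symb_of full hn) => ->.
rewrite !init_upd_max !upd_max_max.
by rewrite ((symb_ok hn (pi_Omega hp' (init a))).1 _).2 [X in _ + X = _]mulrC.
Qed.

Lemma symb_pi_succ p : ((p.+2).*2 <= r)%N -> forall a1 : 'I_p.+1 -> A,
  symb b (piF p.+1 a1) = fun z d =>
    tau b (symb b (piF p (init a1))) (a1 ord_max) (fun j => xat z (val j)) d.
Proof.
move=> hp a1.
have hp' : (p.*2 <= r)%N by lia.
have hn : (1 < r - p.*2)%N by lia.
have hn2 : (1 < r - p.*2 - 2)%N by lia.
have hS := symb_ok hn (pi_Omega hp' (init a1)).
have hT := tau_symbol full (a1 ord_max) hn2 hS.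
have e : (r - p.+1.*2 = r - p.*2 - 2)%N by lia.
have := symbol_cast e hT.
move=> h; apply: (symb_of full); first by lia.
exact: h.
Qed.

Lemma pi_fixA p : (p.+1.*2 <= r)%N ->
  (forall g : 'I_p -> 'I_p, injective g -> forall a, piF p (fun j => a (g j)) = piF p a) ->
  forall g : 'I_p.+1 -> 'I_p.+1, injective g -> g ord_max = ord_max ->
  forall a, piF p.+1 (fun j => a (g j)) = piF p.+1 a.
Proof.
move=> hp IH g ginj hg a.
pose g' := fun j : 'I_p => odflt j (unlift ord_max (g (lift ord_max j))).
have hg' : forall j, g (lift ord_max j) = lift ord_max (g' j).
  move=> j; rewrite /g'; case: unliftP => [k e|e] /=; first exact: e.
  exfalso; have e' : g (lift ord_max j) = g ord_max by rewrite hg.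
  move/ginj: e' => e'.
  by move: (neq_lift ord_max j); rewrite e' eqxx.
have g'inj : injective g'.
  move=> j1 j2 e; apply: (@lift_inj _ ord_max); apply: ginj; by rewrite !hg' e.
have ei : init (fun j => a (g j)) = (fun j => init a (g' j)).
  by apply: functional_extensionality => j; rewrite /init hg'.
apply: functional_extensionality => y; rewrite !pi_S /= ei (IH g' g'inj (init a)) hg.
by [].
Qed.

Lemma pi_swapB q : ((q.+2).*2 <= r)%N -> forall a,
  piF q.+2 (fun j => a (tperm (lift ord_max ord_max) ord_max j)) = piF q.+2 a.
Proof.
move=> hp a.
have hq : (q.*2 <= r)%N by lia.
have hn : (1 < r - q.*2)%N by lia.
have hn2 : (1 < r - q.*2 - 2)%N by lia.
apply: functional_extensionality => y; rewrite !pi_S !(symb_pi_succ hp) /=.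
have e1 : init (init (fun j => a (tperm (lift ord_max ord_max) ord_max j))) = init (init a).
  apply: functional_extensionality => j; rewrite /init.
  have nz1 : lift ord_max (ord_max : 'I_q.+1) != lift ord_max (lift ord_max j)
    by rewrite (inj_eq lift_inj) neq_lift.
  by rewrite tpermD // neq_lift.
have e2 : init (fun j => a (tperm (lift ord_max ord_max) ord_max j)) ord_max = a ord_max.
  by rewrite /init tpermL.
have e3 : init a ord_max = a (lift ord_max ord_max) by [].
rewrite e1 e2 tpermR -e3.
apply: (tau_sym full); first exact: hn2.
exact: (symb_ok hn (pi_Omega hq (init (init a)))).
Qed.

Lemma pi_Sym p : (p.*2 <= r)%N ->
  forall g : 'I_p -> 'I_p, injective g -> forall a, piF p (fun j => a (g j)) = piF p a.
Proof.
elim: p => [|p IH] hp g ginj a.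
  have -> : (fun j => a (g j)) = a by apply: functional_extensionality => -[].
  by [].
have IH' := IH ltac:(lia).
have fixA := pi_fixA hp IH'.
case: (eqVneq (g ord_max) ord_max) => hg; first exact: fixA.
case: p hp IH IH' fixA g ginj a hg => [|q] hp IH IH' fixA g ginj a hg.
  by exfalso; move: hg; rewrite [g ord_max]ord1 [ord_max]ord1 eqxx.
have swapB := pi_swapB hp.
have swapC : forall k, k != ord_max -> forall a0,
    piF q.+2 (fun j => a0 (tperm k ord_max j)) = piF q.+2 a0.
  move=> k hk a0.
  case: (eqVneq k (lift ord_max ord_max)) => [->|hk0]; first exact: swapB.
  have et : forall j, tperm k ord_max j =
      tperm (lift ord_max ord_max) ord_max (tperm k (lift ord_max ord_max)
        (tperm (lift ord_max ord_max) ord_max j)).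
    move=> j.
    have := permJ (tperm k (lift ord_max ord_max)) (tperm (lift ord_max ord_max) ord_max)
      (tperm (lift ord_max ord_max) ord_max j).
    rewrite tpermK tpermJ tpermL (@tpermD _ (lift ord_max ord_max) ord_max k) //.
    - by rewrite eq_sym.
    - by rewrite eq_sym.
  have ea : (fun j => a0 (tperm k ord_max j)) =
    (fun j => (fun j' => a0 (tperm (lift ord_max ord_max) ord_max
        (tperm k (lift ord_max ord_max) j'))) (tperm (lift ord_max ord_max) ord_max j)).
    by apply: functional_extensionality => j; rewrite et.
  rewrite ea (swapB (fun j' => a0 (tperm (lift ord_max ord_max) ord_max
        (tperm k (lift ord_max ord_max) j')))).
  rewrite -(swapB a0).
  apply: (fixA _ (@perm_inj _ (tperm k (lift ord_max ord_max)))).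
  by rewrite tpermD // eq_sym neq_lift.
have hinj : injective (fun j => tperm (g ord_max) ord_max (g j)).
  by move=> x y /perm_inj /ginj.
have hfix : tperm (g ord_max) ord_max (g ord_max) = ord_max by rewrite tpermL.
have ea : (fun j => a (g j)) = (fun j => (fun j' => a (tperm (g ord_max) ord_max j'))
    ((fun j => tperm (g ord_max) ord_max (g j)) j)).
  by apply: functional_extensionality => j; rewrite tpermK.
rewrite ea (fixA _ hinj hfix (fun j' => a (tperm (g ord_max) ord_max j'))).
exact: swapC.
Qed.

End Main.
Arguments piF [R A E] b [r] w p _ _.

Unset Implicit Arguments.

Theorem mainTheorem8 (R : comUnitRingType) (A : comAlgType R) (E : lmodType A)
  (b : E -> E -> A) (r : nat) (w : ('I_r -> E) -> A) :
  contains_rat R ->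
  fg_projective E ->
  Abilinear b -> symmetric_bform b -> strongly_nondegenerate b -> full_form b ->
  (2 <= r)%N -> is_Omega b w ->
  exists pi : forall p : nat, ('I_p -> A) -> ('I_(r - p.*2) -> E) -> A,
    is_pi_family b w pi /\
    (forall pi' : forall p : nat, ('I_p -> A) -> ('I_(r - p.*2) -> E) -> A,
       is_pi_family b w pi' ->
       forall p : nat, (p.*2 <= r)%N ->
       forall (a : 'I_p -> A) (x : 'I_(r - p.*2) -> E), pi' p a x = pi p a x).
Proof.
move=> _ _ _ _ _ full hr hw.
exists (piF b w); split.
  split.
  - move=> p hp; split.
    + exact: pi_Omega.
    + by move=> s a x; rewrite (pi_Sym full hw hp (@perm_inj _ s)).
    + by move=> a i c u v x; rewrite (pi_Lin full hw hp).
    + by move=> a i u v x; rewrite (pi_Der full hw hp).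
  - by [].
  - move=> p hp a.
    have hp' : (p.*2 <= r)%N by lia.
    have hn : (1 < r - p.*2)%N by lia.
    have hS := symb_ok hn (pi_Omega full hw hp' a).
    have -> : (fun y c => piF b w p.+1 (snoc_fun a c) (fun j => xat y (val j))) = symb b (piF b w p a).
      apply: functional_extensionality => y; apply: functional_extensionality => c.
      by rewrite pi_S init_snoc snoc_max xat2 //; lia.
    exact: hS.
move=> pi' [h1 h2 h3] p.
elim: p => [|p IH] hp a x; first by rewrite h2.
have hp' : (p.*2 <= r)%N by lia.
have hn : (1 < r - p.*2)%N by lia.
have ei : pi' p (init a) = piF b w p (init a).
  by apply: functional_extensionality => y; apply: IH.
have hs := h3 p hp (init a).
rewrite ei in hs.
have eS := symb_of full hn hs.
rewrite pi_S eS /= snoc_init xat2 //; lia.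
Qed.
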